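(* Let $A$ be a two-dimensional evolution algebra over a field $\mathbb{K}$ with $A^2=A$. Then $A$ satisfies a nontrivial $3$-linear identity $w(x,y,z)=\lambda_1(xy)z+\lambda_2(yz)x+\lambda_3(zx)y$ (with $(\lambda_1,\lambda_2,\lambda_3)\neq(0,0,0)$) if and only if $A$ is isomorphic to $A_1$; and the $3$-linear identities satisfied by $A_1$ are exactly those with $\lambda_1+\lambda_2+\lambda_3=0$, i.e. those following from the associative identity $(xy)z=x(yz)$.
   Context: An evolution algebra over $\mathbb{K}$ is a $\mathbb{K}$-algebra with a basis $\{e_i\}$ (natural basis) such that $e_ie_j=0$ for $i\neq j$; evolution algebras are commutative. In the free nonassociative commutative algebra on generators $X$, a $3$-linear element in distinct generators $x,y,z$ has the form $w(x,y,z)=\lambda_1(xy)z+\lambda_2(yz)x+\lambda_3(zx)y$, $\lambda_i\in\mathbb{K}$; $A$ satisfies $w$ if $w(a,b,c)=0$ for all $a,b,c\in A$. $A_1$ is the evolution algebra with natural basis $\{e_1,e_2\}$, $e_1^2=e_1$, $e_2^2=e_2$. *)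

(* Defs.v *)
From HB Require Import structures.
From mathcomp Require Import all_boot all_order all_algebra.
Set Implicit Arguments. Unset Strict Implicit. Unset Printing Implicit Defensive.
Import GRing.Theory.
Local Open Scope ring_scope.

(* A two-dimensional evolution algebra over K, presented on K^2 = 'rV[K]_2
   with natural basis e_0, e_1 (the standard row vectors) and structure
   matrix a : e_i * e_i = \sum_j a i j e_j  (i.e. e_i^2 = row i a),
   e_i * e_j = 0 for i <> j. *)
Definition evo_mul (K : fieldType) (a : 'M[K]_2) (x y : 'rV[K]_2) : 'rV[K]_2 :=
  \sum_(i < 2) (x 0 i * y 0 i) *: row i a.

Definition evo_sq_full (K : fieldType) (a : 'M[K]_2) : Prop :=
  forall z : 'rV[K]_2, exists (n : nat) (xs ys : 'I_n -> 'rV[K]_2),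
    z = \sum_(k < n) evo_mul a (xs k) (ys k).

Definition evo_satisfies (K : fieldType) (a : 'M[K]_2) (l1 l2 l3 : K) : Prop :=
  forall x y z : 'rV[K]_2,
    l1 *: evo_mul a (evo_mul a x y) z + l2 *: evo_mul a (evo_mul a y z) x
      + l3 *: evo_mul a (evo_mul a z x) y = 0.

Definition evo_iso (K : fieldType) (a b : 'M[K]_2) : Prop :=
  exists f : 'rV[K]_2 -> 'rV[K]_2,
    [/\ (forall (c : K) (x y : 'rV[K]_2), f (c *: x + y) = c *: f x + f y),
        bijective f &
        forall x y, f (evo_mul a x y) = evo_mul b (f x) (f y)].

(* A_1 : e_1^2 = e_1, e_2^2 = e_2, i.e. structure matrix the identity. *)
Definition A1_mx (K : fieldType) : 'M[K]_2 := 1%:M.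

(* Main.v *)
Require Import Defs.
From HB Require Import structures.
From mathcomp Require Import all_boot all_order all_algebra.
From mathcomp Require Import ring.
Set Implicit Arguments. Unset Strict Implicit. Unset Printing Implicit Defensive.
Import GRing.Theory.
Local Open Scope ring_scope.

Lemma I2 (j : 'I_2) : j = 0 \/ j = 1.
Proof. case: j => [[|[|//]]] Hj; [left|right]; exact: val_inj. Qed.

Lemma evo_mulE (K : fieldType) (a : 'M[K]_2) x y j :
  evo_mul a x y 0 j = x 0 0 * y 0 0 * a 0 j + x 0 1 * y 0 1 * a 1 j.
Proof.
rewrite /evo_mul summxE big_ord_recr big_ord1 /= !mxE.
have -> : widen_ord (leqnSn 1) ord0 = 0 :> 'I_2 by exact: val_inj.
by have -> : ord_max = 1 :> 'I_2 by exact: val_inj.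
Qed.

Definition vec (K : fieldType) (p q : K) : 'rV[K]_2 :=
  \row_(j < 2) (if (j : nat) == 0%N then p else q).

Lemma vec0 (K : fieldType) (p q : K) : vec p q 0 0 = p.
Proof. by rewrite mxE. Qed.
Lemma vec1 (K : fieldType) (p q : K) : vec p q 0 1 = q.
Proof. by rewrite mxE. Qed.

Lemma A1E (K : fieldType) (i j : 'I_2) : A1_mx K i j = (i == j)%:R.
Proof. by rewrite /A1_mx mxE. Qed.

Lemma sat_A1 (K : fieldType) l1 l2 l3 : l1 + l2 + l3 = 0 -> evo_satisfies (A1_mx K) l1 l2 l3.
Proof.
move=> H x y z; apply/rowP => j; rewrite !mxE !evo_mulE !A1E.
have -> : l3 = -(l1+l2) by apply/eqP; rewrite -addr_eq0 addrC H.
by case: (I2 j) => -> /=; ring.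
Qed.

Lemma satE (K : fieldType) (a : 'M[K]_2) l1 l2 l3 : evo_satisfies a l1 l2 l3 ->
  forall x y z j, l1 * evo_mul a (evo_mul a x y) z 0 j + l2 * evo_mul a (evo_mul a y z) x 0 j
     + l3 * evo_mul a (evo_mul a z x) y 0 j = 0.
Proof. by move=> H x y z j; have /rowP/(_ j) := H x y z; rewrite !mxE. Qed.

Lemma span_fun (K : fieldType) (a : 'M[K]_2) c0 c1 : evo_sq_full a ->
  (forall x y, evo_mul a x y 0 0 * c0 + evo_mul a x y 0 1 * c1 = 0) ->
  forall z : 'rV[K]_2, z 0 0 * c0 + z 0 1 * c1 = 0.
Proof.
move=> Hs H z; have [n [xs [ys ->]]] := Hs z.
by rewrite !summxE !mulr_suml -big_split big1 // => k _; exact: H.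
Qed.

Lemma row1_nz (K : fieldType) (a : 'M[K]_2) : evo_sq_full a -> a 1 0 != 0 \/ a 1 1 != 0.
Proof.
move=> Hs; case: (eqVneq (a 1 0) 0) => h0; last by left.
case: (eqVneq (a 1 1) 0) => h1; last by right.
exfalso.
have H1 := @span_fun K a (a 0 1) (- a 0 0) Hs.
have e01 : a 0 1 = 0.
  rewrite -(H1 _ (vec 1 0)) ?vec0 ?vec1; first ring.
  by move=> x y; rewrite !evo_mulE h0 h1; ring.
have e00 : a 0 0 = 0.
  apply/eqP; rewrite -oppr_eq0; apply/eqP.
  rewrite -(H1 _ (vec 0 1)) ?vec0 ?vec1; first ring.
  by move=> x y; rewrite !evo_mulE h0 h1; ring.
have H2 := @span_fun K a 1 0 Hs.
have : (1 : K) = 0.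
  rewrite -(H2 _ (vec 1 0)) ?vec0 ?vec1; first ring.
  by move=> x y; rewrite !evo_mulE h0 h1 e00 e01; ring.
by move/eqP; rewrite oner_eq0.
Qed.

Lemma row0_nz (K : fieldType) (a : 'M[K]_2) : evo_sq_full a -> a 0 0 != 0 \/ a 0 1 != 0.
Proof.
move=> Hs; case: (eqVneq (a 0 0) 0) => h0; last by left.
case: (eqVneq (a 0 1) 0) => h1; last by right.
exfalso.
have H1 := @span_fun K a (a 1 1) (- a 1 0) Hs.
have e11 : a 1 1 = 0.
  rewrite -(H1 _ (vec 1 0)) ?vec0 ?vec1; first ring.
  by move=> x y; rewrite !evo_mulE h0 h1; ring.
have e10 : a 1 0 = 0.
  apply/eqP; rewrite -oppr_eq0; apply/eqP.
  rewrite -(H1 _ (vec 0 1)) ?vec0 ?vec1; first ring.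
  by move=> x y; rewrite !evo_mulE h0 h1; ring.
have H2 := @span_fun K a 1 0 Hs.
have : (1 : K) = 0.
  rewrite -(H2 _ (vec 1 0)) ?vec0 ?vec1; first ring.
  by move=> x y; rewrite !evo_mulE h0 h1 e10 e11; ring.
by move/eqP; rewrite oner_eq0.
Qed.

Lemma test (K : fieldType) (a : 'M[K]_2) l1 l2 l3 j : evo_satisfies a l1 l2 l3 ->
  l1 * (a 0 1 * a 1 j) = 0 /\ l2 * (a 0 1 * a 1 j) = 0 /\ l3 * (a 0 1 * a 1 j) = 0.
Proof.
move=> /satE H; split; [|split].
- have := H (vec 1 0) (vec 1 0) (vec 0 1) j; rewrite !evo_mulE !vec0 !vec1 => E.
  rewrite -E; ring.
- have := H (vec 0 1) (vec 1 0) (vec 1 0) j; rewrite !evo_mulE !vec0 !vec1 => E.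
  rewrite -E; ring.
- have := H (vec 1 0) (vec 0 1) (vec 1 0) j; rewrite !evo_mulE !vec0 !vec1 => E.
  rewrite -E; ring.
Qed.

Lemma test' (K : fieldType) (a : 'M[K]_2) l1 l2 l3 j : evo_satisfies a l1 l2 l3 ->
  l1 * (a 1 0 * a 0 j) = 0 /\ l2 * (a 1 0 * a 0 j) = 0 /\ l3 * (a 1 0 * a 0 j) = 0.
Proof.
move=> /satE H; split; [|split].
- have := H (vec 0 1) (vec 0 1) (vec 1 0) j; rewrite !evo_mulE !vec0 !vec1 => E.
  rewrite -E; ring.
- have := H (vec 1 0) (vec 0 1) (vec 0 1) j; rewrite !evo_mulE !vec0 !vec1 => E.
  rewrite -E; ring.
- have := H (vec 0 1) (vec 1 0) (vec 0 1) j; rewrite !evo_mulE !vec0 !vec1 => E.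
  rewrite -E; ring.
Qed.

Lemma offdiag (K : fieldType) (a : 'M[K]_2) l1 l2 l3 (i k j0 : 'I_2) :
  (l1, l2, l3) != (0, 0, 0) -> a k j0 != 0 ->
  (forall j, l1 * (a i k * a k j) = 0 /\ l2 * (a i k * a k j) = 0 /\ l3 * (a i k * a k j) = 0) ->
  a i k = 0.
Proof.
move=> hl hj Hl; case: (eqVneq (a i k) 0) => // hne; exfalso.
case: (Hl j0) => e1 [e2 e3].
move/eqP: e1; rewrite !mulf_eq0 (negbTE hne) (negbTE hj) !orbF => /eqP e1.
move/eqP: e2; rewrite !mulf_eq0 (negbTE hne) (negbTE hj) !orbF => /eqP e2.
move/eqP: e3; rewrite !mulf_eq0 (negbTE hne) (negbTE hj) !orbF => /eqP e3.
by rewrite e1 e2 e3 eqxx in hl.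
Qed.

Theorem proposition4p1 (K : fieldType) (a : 'M[K]_2) :
  evo_sq_full a ->
  ((exists l1 l2 l3 : K, (l1, l2, l3) != (0, 0, 0) /\ evo_satisfies a l1 l2 l3)
     <-> evo_iso a (A1_mx K))
  /\ (forall l1 l2 l3 : K, evo_satisfies (A1_mx K) l1 l2 l3 <-> l1 + l2 + l3 = 0).
Proof.
move=> Hs; split; last first.
  move=> l1 l2 l3; split; last exact: sat_A1.
  move=> /satE H; have := H (vec 1 0) (vec 1 0) (vec 1 0) 0.
  rewrite !evo_mulE !vec0 !vec1 !A1E /= => E; rewrite -E; ring.
split.
  move=> [l1 [l2 [l3 [hl hs]]]].
  have a01 : a 0 1 = 0.
    case: (row1_nz Hs) => h.
    - by apply: (@offdiag K a l1 l2 l3 0 1 0) => // j; exact: test.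
    - by apply: (@offdiag K a l1 l2 l3 0 1 1) => // j; exact: test.
  have a10 : a 1 0 = 0.
    case: (row0_nz Hs) => h.
    - by apply: (@offdiag K a l1 l2 l3 1 0 0) => // j; exact: test'.
    - by apply: (@offdiag K a l1 l2 l3 1 0 1) => // j; exact: test'.
  have ajj : forall j, a j j != 0.
    move=> j; case: (I2 j) => ->.
    - by case: (row0_nz Hs) => //; rewrite a01 eqxx.
    - by case: (row1_nz Hs) => //; rewrite a10 eqxx.
  exists (fun x : 'rV[K]_2 => \row_j (x 0 j * a j j) : 'rV[K]_2); split.
  - by move=> c x y; apply/rowP => j; rewrite !mxE; ring.
  - exists (fun x : 'rV[K]_2 => \row_j (x 0 j / a j j) : 'rV[K]_2).
    + by move=> x; apply/rowP => j; rewrite !mxE mulfK.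
    + by move=> x; apply/rowP => j; rewrite !mxE divfK.
  - move=> x y; apply/rowP => j; rewrite !mxE !evo_mulE !A1E !mxE.
    by case: (I2 j) => -> /=; rewrite ?a01 ?a10; ring.
move=> [f [lin [g fg gf] hom]].
have f0 : f 0 = 0.
  have h := lin 1 0 0; rewrite !scale1r !addr0 in h.
  have : f 0 + f 0 = f 0 + 0 by rewrite addr0 -h.
  by move/addrI.
have fadd : forall x y, f (x + y) = f x + f y.
  by move=> x y; have := lin 1 x y; rewrite !scale1r.
have fsc : forall c x, f (c *: x) = c *: f x.
  by move=> c x; have := lin c x 0; rewrite !addr0 f0 addr0.
exists 1, (-1), 0; split.
  by rewrite !xpair_eqE oner_eq0.
move=> x y z; apply: (can_inj fg).
rewrite !fadd !fsc !hom f0.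
apply: sat_A1; ring.
Qed.
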